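(* For every integer $m\ge 122$ there exist $k,l\in\mathbb{N}$, pairwise distinct primes $p_1,\dots,p_k$ each congruent to $1$ modulo $4$, and pairwise distinct primes $q_1,\dots,q_l$ each congruent to $3$ modulo $4$, such that $$m=p_1+\cdots+p_k=q_1+\cdots+q_l.$$ *)

(* Defs.v *)
From mathcomp Require Import all_boot.

(* Main.v *)
Require Import Defs.
From mathcomp Require Import all_boot.
From mathcomp Require Import zify.
Set Implicit Arguments. Unset Strict Implicit. Unset Printing Implicit Defensive.

Lemma dvdn_logn m n : 0 < m -> 0 < n ->
  (forall p, prime p -> logn p m <= logn p n) -> m %| n.
Proof.
move=> m0 n0 h; apply/dvdn_partP => // p; rewrite mem_primes => /and3P[pp _ _].
by rewrite p_part pfactor_dvdn // h.
Qed.

Lemma logn_prod (I : Type) (r : seq I) (P : pred I) F p :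
  (forall i, P i -> 0 < F i) ->
  logn p (\prod_(i <- r | P i) F i) = \sum_(i <- r | P i) logn p (F i).
Proof.
move=> F0; elim: r => [|i r IH]; first by rewrite !big_nil logn1.
rewrite !big_cons; case: ifP => Pi; last exact: IH.
by rewrite lognM ?F0 ?IH // prodn_cond_gt0.
Qed.

Lemma logn_count p n K : prime p -> 0 < n -> n <= K ->
  logn p n = \sum_(1 <= k < K) (p ^ k %| n).
Proof.
move=> pp n0 nK; rewrite logn_count_dvd //.
rewrite (@big_cat_nat _ _ _ n 1 K) //= [X in _ = _ + X]big1_seq ?addn0 //.
move=> k /andP[_]; rewrite mem_index_iota => /andP[nk _].
case: (boolP (p ^ k %| n)) => // /(dvdn_leq n0).
have : n < p ^ k.
  apply: (leq_trans (ltn_expl n (prime_gt1 pp))); rewrite leq_exp2l //; exact: prime_gt1.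
lia.
Qed.

Lemma sum_cut a b t (P : pred nat) : (forall k, P k -> 0 < k <= t) ->
  \sum_(a <= k < b) P k <= minn b.-1 t.
Proof.
move=> hP; elim: b => [|b IH]; first by rewrite big_geq.
case: (leqP a b) => ab; last by rewrite big_geq.
rewrite big_nat_recr //=.
case: (boolP (P b)) => Pb /=.
  have := hP _ Pb; move: IH; lia.
move: IH; lia.
Qed.

Lemma cnt_mod q M r : 0 < q -> r < q ->
  \sum_(0 <= i < M) (i %% q == r) = M %/ q + (r < M %% q).
Proof.
move=> q0 rq; elim: M => [|M IH]; first by rewrite big_geq // div0n mod0n.
rewrite big_nat_recr //= IH.
have e1 := divn_eq M q; have e2 := divn_eq M.+1 q.
have l1 := ltn_pmod M q0; have l2 := ltn_pmod M.+1 q0.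
rewrite modnS divnS //; case: ifP => d.
  have : M %% q = q.-1.
    have m0 : M.+1 %% q = 0 by apply/eqP.
    rewrite m0 divnS // d in e2.
    move: e1 e2; set y := M %/ q * q; rewrite mulnDl mul1n -/y; lia.
  move=> ->; case: (ltnP r q.-1) => h; lia.
case: (eqVneq (M %% q) r) => h; lia.
Qed.

Lemma dvd_mod_red q c d i : 0 < q -> (q %| c * i + d) = (q %| c * (i %% q) + d).
Proof. by move=> q0; rewrite /dvdn -[in RHS]modnDml modnMmr modnDml. Qed.

Definition i3 q := if q %% 4 == 1 then (3 * q - 3) %/ 4 else (q - 3) %/ 4.
Definition i5 q := if q %% 4 == 1 then (q - 5) %/ 4 else (3 * q - 5) %/ 4.
Definition j1 q := (q - 1) %/ 2.

Lemma res3 q r : (q %% 4 == 1) || (q %% 4 == 3) -> 3 <= q -> r < q ->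
  (q %| 4 * r + 3) = (r == i3 q).
Proof.
move=> hq q3 rq; rewrite /i3; apply/idP/eqP => [/dvdnP[k hk] | ->].
  have : k < 4 by nia.
  by case: k hk => [|[|[|[|k]]]] hk //= _; case: ifP => h; lia.
apply/dvdnP; case: ifP => h.
  by exists 3; lia.
by exists 1; lia.
Qed.

Lemma res5 q r : (q %% 4 == 1) || (q %% 4 == 3) -> 3 <= q -> r < q ->
  (q %| 4 * r + 5) = (r == i5 q).
Proof.
move=> hq q3 rq; rewrite /i5; apply/idP/eqP => [/dvdnP[k hk] | ->].
  have : k < 5 by nia.
  by case: k hk => [|[|[|[|[|k]]]]] hk //= _; case: ifP => h; lia.
apply/dvdnP; case: ifP => h.
  by exists 1; lia.
by exists 3; lia.
Qed.

Lemma res1 q r : (q %% 4 == 1) || (q %% 4 == 3) -> 3 <= q -> r < q ->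
  (q %| 2 * r + 1) = (r == j1 q).
Proof.
move=> hq q3 rq; rewrite /j1; apply/idP/eqP => [/dvdnP[k hk] | ->].
  have : k < 3 by nia.
  by case: k hk => [|[|[|k]]] hk //= _; lia.
by apply/dvdnP; exists 1; lia.
Qed.

Lemma cnt_gen q M (c d : nat) (f : nat -> nat) :
  0 < q -> (forall r, r < q -> (q %| c * r + d) = (r == f q)) -> f q < q ->
  \sum_(0 <= i < M) (q %| c * i + d) = M %/ q + (f q < M %% q).
Proof.
move=> q0 hr fq; rewrite -(cnt_mod M q0 fq); apply: eq_bigr => i _.
by rewrite dvd_mod_red // hr // ltn_pmod.
Qed.

Lemma cnt3 q M : (q %% 4 == 1) || (q %% 4 == 3) -> 3 <= q ->
  \sum_(0 <= i < M) (q %| 4 * i + 3) <=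
  \sum_(0 <= i < M) (q %| 2 * i + 1) + ((q %% 4 == 3) && (q <= 4 * M)).
Proof.
move=> hq q3.
have q0 : 0 < q by lia.
rewrite (@cnt_gen q M 4 3 i3) //; last first.
  by rewrite /i3; case: ifP; lia.
  by move=> r; apply: res3.
rewrite (@cnt_gen q M 2 1 j1) //; last first.
  by rewrite /j1; lia.
  by move=> r; apply: res1.
have l := ltn_pmod M q0.
have sm : M < q -> M %% q = M by move=> h; rewrite modn_small.
rewrite /i3 /j1; case: ifP => h.
  case: (ltnP ((3 * q - 3) %/ 4) (M %% q)); case: (ltnP ((q - 1) %/ 2) (M %% q)); lia.
case: (leqP q (4 * M)) => hM.
  case: (ltnP ((q - 3) %/ 4) (M %% q)); case: (ltnP ((q - 1) %/ 2) (M %% q)); lia.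
have := sm (ltac:(lia)).
case: (ltnP ((q - 3) %/ 4) (M %% q)); case: (ltnP ((q - 1) %/ 2) (M %% q)); lia.
Qed.

Lemma cnt5 q M : (q %% 4 == 1) || (q %% 4 == 3) -> 3 <= q ->
  \sum_(0 <= i < M) (q %| 4 * i + 5) <=
  \sum_(0 <= i < M) (q %| 2 * i + 1) + ((q %% 4 == 1) && (q <= 4 * M + 1)).
Proof.
move=> hq q3.
have q0 : 0 < q by lia.
rewrite (@cnt_gen q M 4 5 i5) //; last first.
  by rewrite /i5; case: ifP; lia.
  by move=> r; apply: res5.
rewrite (@cnt_gen q M 2 1 j1) //; last first.
  by rewrite /j1; lia.
  by move=> r; apply: res1.
have l := ltn_pmod M q0.
have sm : M < q -> M %% q = M by move=> h; rewrite modn_small.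
rewrite /i5 /j1; case: ifP => h; last first.
  case: (ltnP ((3 * q - 5) %/ 4) (M %% q)); case: (ltnP ((q - 1) %/ 2) (M %% q)); lia.
case: (leqP q (4 * M + 1)) => hM.
  case: (ltnP ((q - 5) %/ 4) (M %% q)); case: (ltnP ((q - 1) %/ 2) (M %% q)); lia.
have := sm (ltac:(lia)).
case: (ltnP ((q - 5) %/ 4) (M %% q)); case: (ltnP ((q - 1) %/ 2) (M %% q)); lia.
Qed.

Definition Lp a x := \prod_(0 <= p < x.+1 | prime p && ((p %% 4 == a) || (p * p <= x)))
   p ^ trunc_log p x.

Lemma Lp_gt0 a x : 0 < Lp a x.
Proof. by apply: prodn_cond_gt0 => p /andP[pp _]; rewrite expn_gt0 prime_gt0. Qed.

Lemma L_ge a x p : prime p -> p <= x -> (p %% 4 == a) || (p * p <= x) ->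
  trunc_log p x <= logn p (Lp a x).
Proof.
move=> pp px h; rewrite -pfactor_dvdn ?Lp_gt0 //.
rewrite /Lp big_mkcond (bigD1_seq p) /=.
- by rewrite pp h /=; exact: dvdn_mulr.
- by rewrite mem_index_iota; lia.
- by rewrite mem_iota iota_uniq.
Qed.

Lemma logn_AP p M c d K : prime p -> 0 < d -> c * M + d <= K ->
  logn p (\prod_(0 <= i < M) (c * i + d)) =
  \sum_(1 <= k < K) \sum_(0 <= i < M) (p ^ k %| c * i + d).
Proof.
move=> pp d0 hK; rewrite logn_prod; last by move=> i _; lia.
rewrite exchange_big_nat; apply: eq_big_nat => i hi.
apply: logn_count => //; nia.
Qed.

Lemma ind_sum p a x K : prime p ->
  \sum_(1 <= k < K) ((p ^ k %% 4 == a) && (p ^ k <= x)) <= logn p (Lp a x).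
Proof.
move=> pp; have p1 := prime_gt1 pp.
case: (boolP ((p <= x) && ((p %% 4 == a) || (p * p <= x)))) => [/andP[px h]|hn].
  apply: leq_trans (L_ge pp px h).
  have -> : \sum_(1 <= k < K) ((p ^ k %% 4 == a) && (p ^ k <= x)) =
            \sum_(1 <= k < K) ((0 < k) && ((p ^ k %% 4 == a) && (p ^ k <= x))).
    by apply: eq_big_nat => k /andP[k1 _]; rewrite k1.
  apply: leq_trans (sum_cut _ _ _) _; last exact: geq_minr.
  move=> k /andP[k0 /andP[_ hk]]; rewrite k0; exact: trunc_log_max.
rewrite big1_seq //= => k; rewrite mem_index_iota => /andP[k1 _].
case: (boolP ((p ^ k %% 4 == a) && (p ^ k <= x))) => //= /andP[/eqP e hk].
exfalso; move/negP: hn; apply; apply/andP; split.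
  apply/(leq_trans _ hk); rewrite -{1}(expn1 p) leq_pexp2l ?(prime_gt0 pp) //.
case: k k1 e hk => [|[|k]] k1 e hk //; first by rewrite expn1 in e; rewrite e eqxx.
apply/orP; right; apply: leq_trans hk; rewrite mulnn leq_pexp2l ?(prime_gt0 pp) //.
Qed.

Lemma val_gen p M d a x :
  (forall q, (q %% 4 == 1) || (q %% 4 == 3) -> 3 <= q ->
     \sum_(0 <= i < M) (q %| 4 * i + d) <=
     \sum_(0 <= i < M) (q %| 2 * i + 1) + ((q %% 4 == a) && (q <= x))) ->
  prime p -> odd d ->
  logn p (\prod_(0 <= i < M) (4 * i + d)) <=
  logn p (\prod_(0 <= i < M) (2 * i + 1)) + logn p (Lp a x).
Proof.
move=> hc pp od.
have dd : d %% 2 = 1 by rewrite modn2 od.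
have d0 : 0 < d by lia.
rewrite (@logn_AP p M 4 d (4 * M + d)) // (@logn_AP p M 2 1 (4 * M + d)) //; last by lia.
case: (eqVneq p 2) => [p2|p2].
  rewrite big1_seq ?leq0n // => k /andP[_]; rewrite mem_index_iota => /andP[k1 _].
  rewrite big1_seq // => i _.
  case: (boolP (p ^ k %| 4 * i + d)) => // /(dvdn_trans _) h.
  have : 2 %| 4 * i + d by apply: h; rewrite p2; case: k k1 => // k _; rewrite expnS dvdn_mulr.
  by rewrite dvdn2 oddD oddM od /=.
have op : odd p by move: p2; case: (boolP (odd p)) => // /(prime_oddPn pp) ->.
have p3 : 3 <= p by have := prime_gt1 pp; case: p op {pp p2} => [|[|[|]]].
apply: leq_trans (_ : \sum_(1 <= k < 4 * M + d)
   (\sum_(0 <= i < M) (p ^ k %| 2 * i + 1) + ((p ^ k %% 4 == a) && (p ^ k <= x))) <= _).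
  rewrite [X in X <= _]big_seq [X in _ <= X]big_seq; apply: leq_sum => k.
  rewrite mem_index_iota => /andP[k1 _]; apply: hc.
    have : odd (p ^ k) by rewrite oddX op orbT.
    rewrite -[odd _]/(odd (p ^ k)) => h; have : p ^ k %% 2 = 1 by rewrite modn2 h.
    lia.
  apply: leq_trans p3 _; rewrite -{1}(expn1 p) leq_pexp2l ?(prime_gt0 pp) //.
rewrite big_split /= leq_add2l; exact: ind_sum.
Qed.

Lemma Lp_le a x t : 0 < x -> (forall p, p * p <= x -> p <= t) ->
  Lp a x <= x ^ t * \prod_(0 <= p < x.+1 | prime p && (p %% 4 == a)) p.
Proof.
move=> x0 ht.
apply: (@leq_trans (\prod_(0 <= p < x.+1)
   ((if prime p && (p * p <= x) then x else 1) *
    (if prime p && (p %% 4 == a) then p else 1)))).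
  rewrite /Lp big_mkcond /=; apply: leq_prod => p _.
  case: (boolP (prime p)) => pp /=; last by [].
  have p1 := prime_gt1 pp.
  have tP := trunc_logP p1 x0.
  case: (leqP (p * p) x) => hpx /=.
    rewrite orbT; case: ifP => _; nia.
  rewrite orbF mul1n; case: ifP => // _.
  apply: (@leq_trans (p ^ 1)); last by rewrite expn1.
  rewrite leq_pexp2l ?(prime_gt0 pp) //.
  case: (leqP (trunc_log p x) 1) => // h2.
  have : p ^ 2 <= p ^ trunc_log p x by rewrite leq_pexp2l; lia.
  rewrite -mulnn; lia.
rewrite big_split /= -!big_mkcond /= leq_mul2r; apply/orP; right.
rewrite -(expn_sum _ _ (fun p => prime p && (p * p <= x)) (fun _ => 1)) leq_pexp2l //.
rewrite big_mkcond /=.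
have e : \sum_(0 <= p < x.+1) (if prime p && (p * p <= x) then 1 else 0) =
         \sum_(0 <= p < x.+1) (prime p && (p * p <= x)) by apply: eq_bigr => p _; case: ifP.
have hs := @sum_cut 0 x.+1 t (fun p => prime p && (p * p <= x)).
rewrite e; apply: (leq_trans (hs _)); last exact: geq_minr.
move=> p /andP[pp hp]; rewrite prime_gt0 //=; exact: ht.
Qed.

Lemma B2gen a M x t d : 0 < x -> odd d -> 2 <= d ->
  (forall q, (q %% 4 == 1) || (q %% 4 == 3) -> 3 <= q ->
     \sum_(0 <= i < M) (q %| 4 * i + d) <=
     \sum_(0 <= i < M) (q %| 2 * i + 1) + ((q %% 4 == a) && (q <= x))) ->
  (forall p, p * p <= x -> p <= t) ->
  2 ^ M <= x ^ t * \prod_(0 <= p < x.+1 | prime p && (p %% 4 == a)) p.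
Proof.
move=> x0 od d2 hc ht; apply: leq_trans (Lp_le a x0 ht).
set O := \prod_(0 <= i < M) (2 * i + 1).
set A := \prod_(0 <= i < M) (4 * i + d).
have O0 : 0 < O by apply: prodn_cond_gt0 => i _; lia.
have A0 : 0 < A by apply: prodn_cond_gt0 => i _; lia.
have h1 : 2 ^ M * O <= A.
  have -> : 2 ^ M = \prod_(0 <= i < M) 2 by rewrite prod_nat_const_nat subn0.
  rewrite /O /A -big_split /=; apply: leq_prod => i _; lia.
have h2 : A %| O * Lp a x.
  apply: dvdn_logn => //; first by rewrite muln_gt0 O0 Lp_gt0.
  move=> p pp; rewrite lognM ?Lp_gt0 //; exact: val_gen.
have h3 : A <= O * Lp a x by apply: dvdn_leq => //; rewrite muln_gt0 O0 Lp_gt0.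
rewrite mulnC in h3; have := leq_trans h1 h3.
by rewrite leq_pmul2r.
Qed.

Lemma B2 a M x t : 0 < M -> (a = 3 /\ x = 4 * M \/ a = 1 /\ x = 4 * M + 1) ->
  (forall p, p * p <= x -> p <= t) ->
  2 ^ M <= x ^ t * \prod_(0 <= p < x.+1 | prime p && (p %% 4 == a)) p.
Proof.
move=> M0 [[-> ->]|[-> ->]] ht.
  apply: (@B2gen 3 M (4 * M) t 3) => //; first lia.
  move=> q hq q3; exact: cnt3.
apply: (@B2gen 1 M (4 * M + 1) t 5) => //; first lia.
move=> q hq q3; exact: cnt5.
Qed.

Lemma prime_dvd_fact_le q k : prime q -> q %| k`! -> q <= k.
Proof.
move=> pq; elim: k => [|k IH]; first by rewrite fact0 dvdn1 => /eqP q1; rewrite q1 in pq.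
rewrite factS Euclid_dvdM // => /orP[h|/IH]; last lia.
exact: dvdn_leq h.
Qed.

Lemma binC_le m : 'C(m.*2.+1, m) <= 4 ^ m.
Proof.
have e : 2 ^ (m.*2.+1) = \sum_(0 <= i < m.*2.+2) 'C(m.*2.+1, i).
  rewrite -{1}[2]/(1 + 1) expnDn big_mkord; apply: eq_bigr => i _.
  by rewrite !exp1n !muln1.
have h : 'C(m.*2.+1, m) + 'C(m.*2.+1, m.+1) <= 2 ^ (m.*2.+1).
  rewrite e (@big_cat_nat _ _ _ m 0 m.*2.+2) //=; last lia.
  rewrite (@big_cat_nat _ _ _ m.+2 m m.*2.+2) /=; [|lia|lia].
  rewrite big_nat_recl //= big_nat1.
  lia.
have : 'C(m.*2.+1, m.+1) = 'C(m.*2.+1, m).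
  by rewrite -bin_sub; [congr 'C(_, _); lia | lia].
move=> e2; rewrite e2 in h.
have : 2 ^ (m.*2.+1) = 2 * 4 ^ m by rewrite expnS -mul2n expnM.
lia.
Qed.

Lemma prod_primes_dvd_bin m N : N <= m.*2.+2 ->
  \prod_(m.+2 <= p < N | prime p) p %| 'C(m.*2.+1, m).
Proof.
elim: N => [|N IH] hN; first by rewrite big_geq.
case: (leqP N m.+1) => hNm.
  by rewrite big_geq //; lia.
rewrite big_mkcond big_nat_recr /=; last lia.
rewrite -big_mkcond; case: ifP => pN; last by rewrite muln1; apply: IH; lia.
rewrite Gauss_dvd; last first.
  rewrite coprime_sym prime_coprime // Euclid_dvd_prod // big_has_cond.
  apply/hasP => -[p]; rewrite mem_index_iota => hp /andP[pp].
  rewrite dvdn_prime2 // => /eqP e; lia.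
rewrite IH /=; last lia.
have hf := bin_fact (ltac:(lia) : m <= m.*2.+1).
have : N %| (m.*2.+1)`! by apply: dvdn_fact; lia.
rewrite -hf Euclid_dvdM // Euclid_dvdM // => /orP[//|/orP[]] /(prime_dvd_fact_le pN); lia.
Qed.

Lemma theta_step n : \prod_(0 <= p < n.+2 | prime p) p =
  \prod_(0 <= p < n.+1 | prime p) p * (if prime n.+1 then n.+1 else 1).
Proof. by rewrite big_mkcond big_nat_recr //= -big_mkcond. Qed.

Lemma primorial n : \prod_(0 <= p < n.+1 | prime p) p <= 4 ^ n.
Proof.
elim: n {-2}n (leqnn n) => [|N IH] n hn.
  by move: hn; rewrite leqn0 => /eqP ->; rewrite big_mkcond big_nat1.
case: (leqP n N) => hnN; first exact: IH.
have -> : n = N.+1 by lia.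
case: N IH {hn hnN} => [|N] IH.
  by rewrite big_mkcond !big_nat_recr //= big_geq.
case: N IH => [|N] IH.
  by rewrite big_mkcond !big_nat_recr //= big_geq.
case: (boolP (odd N)) => oN.
  rewrite theta_step.
  have -> : prime N.+3 = false.
    apply/negP => pN; have h : ~~ odd N.+3 by rewrite /= oN.
    move/(prime_oddPn pN): h; lia.
  rewrite muln1; apply: leq_trans (IH N.+2 (leqnn _)) _; rewrite leq_exp2l //.
set m := N./2.+1.
have hm : N.+3 = m.*2.+1.
  rewrite /m; have := odd_double_half N; rewrite (negbTE oN); rewrite -!addnn; lia.
rewrite hm (@big_cat_nat _ _ _ m.+2) //=; last lia.
have h1 := IH m.+1 (ltac:(lia)).
have b0 : 0 < 'C(m.*2.+1, m) by rewrite bin_gt0; lia.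
have h2 := dvdn_leq b0 (@prod_primes_dvd_bin m m.*2.+2 (leqnn _)).
have h3 := binC_le m.
apply: leq_trans (leq_mul h1 (leq_trans h2 h3)) _.
rewrite -expnD leq_exp2l //; lia.
Qed.

Lemma expE j : 16 * (j + 10) * (2 ^ (j + 10) + 240) + 1 <= 2 ^ (2 * j + 18).
Proof.
elim: j => [|j IH]; first by [].
have -> : 2 ^ (j.+1 + 10) = 2 * 2 ^ (j + 10) by rewrite addSn expnS.
have -> : 2 ^ (2 * j.+1 + 18) = 4 * 2 ^ (2 * j + 18).
  by rewrite (_ : 2 * j.+1 + 18 = (2 * j + 18).+2) ?expnS ?mulnA //; lia.
move: IH; set u := 2 ^ (j + 10); set v := 2 ^ (2 * j + 18); nia.
Qed.

Lemma expo X : 2 ^ 14 <= X -> exists t,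
  (forall p, p * p <= 16 * X + 1 -> p <= t) /\ (16 * X + 1) ^ (t + 240) < 2 ^ (2 * X).
Proof.
move=> hX; set y := 16 * X + 1.
set n := trunc_log 2 y.
have y0 : 0 < y by rewrite /y; lia.
have h1 : 2 ^ n <= y := trunc_logP (isT : 1 < 2) y0.
have h2 : y < 2 ^ n.+1 := trunc_log_ltn y (isT : 1 < 2).
have n18 : 18 <= n.
  apply: trunc_log_max => //.
  have -> : 2 ^ 18 = 2 ^ 4 * 2 ^ 14 by rewrite -expnD.
  move: hX; rewrite /y; set z := 2 ^ 14; rewrite (_ : 2 ^ 4 = 16) //; lia.
set h := n.+2 %/ 2.
exists (2 ^ h); split.
  move=> p hp; have : 2 ^ n.+1 <= 2 ^ h * 2 ^ h.
    by rewrite -expnD leq_exp2l //; rewrite /h; lia.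
  move: hp h2; set t := 2 ^ h; nia.
apply: (@leq_trans ((2 ^ n.+1) ^ (2 ^ h + 240))).
  by rewrite ltn_exp2r // addn_gt0 orbT.
rewrite -expnM leq_exp2l //.
have hE := expE (h - 10).
have e1 : h - 10 + 10 = h by rewrite /h; lia.
have e2 : 2 * (h - 10) + 18 = 2 * h - 2 by rewrite /h; lia.
rewrite e1 e2 in hE.
have : 2 ^ (2 * h - 2) <= 2 ^ n by rewrite leq_exp2l // /h; lia.
move: hE h1; rewrite /y /h; set u := 2 ^ (_ %/ 2); set v := 2 ^ (2 * _ - 2); set w := 2 ^ n.
have : n.+1 <= 2 * (n.+2 %/ 2) by lia.
nia.
Qed.

Lemma sum_const_filt (r : seq nat) (P : pred nat) k :
  \sum_(i <- r | P i) k = (\sum_(i <- r | P i) 1) * k.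
Proof.
elim: r => [|i r IH]; first by rewrite !big_nil.
by rewrite !big_cons; case: ifP => // _; rewrite IH mulnDl mul1n.
Qed.

Lemma theta_mono a y :
  \prod_(0 <= p < y.+1 | prime p && (p %% 4 == a)) p <=
  \prod_(0 <= p < y.+2 | prime p && (p %% 4 == a)) p.
Proof.
rewrite [X in _ <= X]big_mkcond big_nat_recr //= -big_mkcond.
by case: ifP => _; rewrite ?muln1 // leq_pmulr.
Qed.

Lemma key a X : (a = 1 \/ a = 3) -> 16384 <= X ->
  241 * X.+1 <= \sum_(X.+1 <= p < (16 * X).+2 | prime p && (p %% 4 == a)) p.
Proof.
move=> ha hX.
have hX' : 2 ^ 14 <= X by rewrite (_ : 2 ^ 14 = 16384).
have [t [ht hexp]] := expo hX'.
have X0 : 0 < X by lia.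
set Pi := \prod_(X.+1 <= p < (16 * X).+2 | prime p && (p %% 4 == a)) p.
have hB : 2 ^ (4 * X) <= (16 * X + 1) ^ t *
            \prod_(0 <= p < (16 * X).+2 | prime p && (p %% 4 == a)) p.
  case: ha => ha.
    have e : 16 * X + 1 = 4 * (4 * X) + 1 by lia.
    have hb := @B2 a (4 * X) (16 * X + 1) t (ltac:(lia)) (or_intror (conj ha e)) ht.
    have e2 : (16 * X).+2 = (16 * X + 1).+1 by rewrite addn1.
    by rewrite e2.
  apply: (@leq_trans ((16 * X) ^ t *
          \prod_(0 <= p < (16 * X).+1 | prime p && (p %% 4 == a)) p)).
    apply: (@B2 a (4 * X) (16 * X) t); [lia| |].
      by left; split => //; lia.
    by move=> p hp; apply: ht; lia.
  apply: leq_mul; last exact: theta_mono.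
  by case: t {ht hexp} => // t; rewrite leq_exp2r //; lia.
have hsplit : \prod_(0 <= p < (16 * X).+2 | prime p && (p %% 4 == a)) p =
   \prod_(0 <= p < X.+1 | prime p && (p %% 4 == a)) p * Pi.
  by rewrite /Pi (@big_cat_nat _ _ _ X.+1) //; lia.
have hth : \prod_(0 <= p < X.+1 | prime p && (p %% 4 == a)) p <= 4 ^ X.
  apply: leq_trans (primorial X); rewrite [X in X <= _]big_mkcond [X in _ <= X]big_mkcond.
  by apply: leq_prod => p _; case: (boolP (prime p)) => pp //=; case: ifP => // _; exact: prime_gt0.
have h2 : 2 ^ (2 * X) <= (16 * X + 1) ^ t * Pi.
  have e4 : 4 ^ X = 2 ^ (2 * X) by rewrite expnM.
  have e16 : 2 ^ (4 * X) = 2 ^ (2 * X) * 2 ^ (2 * X) by rewrite -expnD; congr (2 ^ _); lia.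
  rewrite hsplit e16 in hB; rewrite e4 in hth.
  have := leq_trans hB (leq_mul (leqnn _) (leq_mul hth (leqnn Pi))).
  rewrite mulnCA leq_pmul2l //; exact: expn_gt0.
set c := \sum_(X.+1 <= p < (16 * X).+2 | prime p && (p %% 4 == a)) 1.
have hPi : Pi <= (16 * X + 1) ^ c.
  rewrite /Pi /c expn_sum big_seq_cond [X in _ <= X]big_seq_cond.
  apply: leq_prod => p /andP[]; rewrite mem_index_iota => hp _; rewrite expn1; lia.
have hc : 241 <= c.
  rewrite leqNgt; apply/negP => hc.
  have : 2 ^ (2 * X) <= (16 * X + 1) ^ (t + 240).
    apply: leq_trans h2 _; rewrite expnD leq_mul2l; apply/orP; right.
    apply: leq_trans hPi _; rewrite leq_pexp2l //; lia.
  by rewrite leqNgt hexp.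
apply: (@leq_trans (c * X.+1)); first by rewrite leq_mul2r hc orbT.
rewrite -sum_const_filt big_seq_cond [X in _ <= X]big_seq_cond.
apply: leq_sum => p /andP[]; rewrite mem_index_iota; lia.
Qed.

Definition cls (a p : nat) := prime p && (p %% 4 == a).
Definition good a X lo hi := forall m, lo <= m <= hi -> exists ps : seq nat,
  [/\ uniq ps, all (cls a) ps, all (fun p => p <= X) ps & sumn ps = m].

Lemma good_mono a X Y lo hi : X <= Y -> good a X lo hi -> good a Y lo hi.
Proof.
move=> XY g m /g [ps [u c b s]]; exists ps; split=> //.
by apply/allP=> p /(allP b) /= pX; apply: leq_trans XY.
Qed.

Lemma good_step a X lo hi p : good a X lo hi -> cls a p -> X < p ->
  p + lo <= hi.+1 -> good a p lo (hi + p).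
Proof.
move=> g cp Xp plo m /andP[lm mh].
case: (leqP m hi) => mh'.
  have [ps [u c b s]] := g m (introT andP (conj lm mh')).
  exists ps; split=> //; apply/allP=> q /(allP b) /= qX; exact: (leq_trans qX (ltnW Xp)).
have [ps [u c b s]] := g (m - p) (introT andP (conj (ltac:(lia) : lo <= m - p) (ltac:(lia) : m - p <= hi))).
exists (p :: ps); split => /=.
- rewrite u andbT; apply/negP=> /(allP b) /=; lia.
- by rewrite cp c.
- rewrite leqnn /=; apply/allP=> q /(allP b) /= qX; lia.
- lia.
Qed.

Fixpoint chain_ok a X H (l : seq nat) : bool :=
  if l is p :: l' then [&& cls a p, X < p, p + 122 <= H.+1 & chain_ok a p (H + p) l']
  else true.

Lemma chain_good a X H l : good a X 122 H -> chain_ok a X H l ->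
  good a (last X l) 122 (H + sumn l).
Proof.
elim: l X H => [|p l IH] X H /= g; first by rewrite addn0.
move=> /and4P[cp Xp pH c].
rewrite addnA; apply: (IH p (H + p)) c; exact: (good_step g cp Xp).
Qed.

Definition base_ok a X (tbl : seq (seq nat)) :=
  all (fun i => let ps := nth [::] tbl i in
       [&& uniq ps, all (cls a) ps, all (fun p => p <= X) ps & sumn ps == 122 + i])
      (iota 0 (size tbl)).

Lemma base_good a X tbl : base_ok a X tbl -> good a X 122 (121 + size tbl).
Proof.
move=> /allP b m /andP[l h].
have /b /and4P[u c bb /eqP s] : m - 122 \in iota 0 (size tbl) by rewrite mem_iota; lia.
by exists (nth [::] tbl (m - 122)); split => //; rewrite s; lia.
Qed.

Lemma good_range a X H Y : good a X 122 H -> Y + 122 <= H.+1 ->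
  forall y, X <= y <= Y -> good a y 122 (H + \sum_(X.+1 <= p < y.+1 | cls a p) p).
Proof.
move=> g YH; elim=> [|y IH] /andP[Xy yY].
  have X0 : X = 0 by lia.
  by rewrite big_geq // addn0; move: g; rewrite X0.
case: (leqP X y) => Xy'; last first.
  have XE : X = y.+1 by lia.
  by rewrite big_geq // addn0; move: g; rewrite XE.
rewrite big_mkcond big_nat_recr /=; last by lia.
rewrite -big_mkcond.
have g' := IH (introT andP (conj Xy' (ltnW yY))).
case: ifP => cp.
  rewrite addnA; apply: good_step g' cp _ _ => //.
  lia.
rewrite addn0; exact: good_mono g'.
Qed.

Definition tbl1 : seq (seq nat) := [:: [:: 13; 109];
 [:: 29; 41; 53];
 [:: 17; 29; 37; 41];
 [:: 5; 13; 29; 37; 41];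
 [:: 53; 73];
 [:: 29; 37; 61];
 [:: 5; 29; 41; 53];
 [:: 5; 17; 29; 37; 41];
 [:: 41; 89];
 [:: 37; 41; 53];
 [:: 13; 29; 37; 53];
 [:: 5; 13; 17; 37; 61];
 [:: 61; 73];
 [:: 17; 29; 89];
 [:: 17; 29; 37; 53];
 [:: 13; 17; 29; 37; 41];
 [:: 41; 97];
 [:: 37; 41; 61];
 [:: 17; 29; 41; 53];
 [:: 5; 17; 29; 37; 53];
 [:: 5; 13; 17; 29; 37; 41];
 [:: 29; 53; 61];
 [:: 13; 37; 41; 53];
 [:: 5; 17; 29; 41; 53];
 [:: 37; 109];
 [:: 13; 61; 73];
 [:: 17; 37; 41; 53];
 [:: 13; 17; 29; 37; 53];
 [:: 61; 89];
 [:: 37; 53; 61];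
 [:: 13; 37; 41; 61];
 [:: 13; 17; 29; 41; 53];
 [:: 5; 13; 17; 29; 37; 53];
 [:: 41; 53; 61];
 [:: 17; 37; 41; 61];
 [:: 13; 17; 29; 37; 61];
 [:: 5; 13; 17; 29; 41; 53];
 [:: 29; 41; 89];
 [:: 29; 37; 41; 53];
 [:: 13; 17; 37; 41; 53];
 [:: 5; 13; 17; 29; 37; 61];
 [:: 37; 53; 73];
 [:: 13; 37; 53; 61];
 [:: 5; 29; 37; 41; 53];
 [:: 5; 13; 17; 37; 41; 53];
 [:: 41; 53; 73];
 [:: 29; 37; 41; 61];
 [:: 13; 17; 37; 41; 61];
 [:: 73; 97];
 [:: 37; 61; 73];
 [:: 17; 41; 53; 61];
 [:: 13; 29; 37; 41; 53];
 [:: 5; 13; 17; 37; 41; 61];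
 [:: 41; 61; 73];
 [:: 13; 37; 53; 73];
 [:: 17; 29; 37; 41; 53];
 [:: 5; 13; 29; 37; 41; 53];
 [:: 37; 53; 89];
 [:: 29; 37; 53; 61];
 [:: 13; 29; 37; 41; 61];
 [:: 5; 17; 29; 37; 41; 53];
 [:: 41; 53; 89];
 [:: 29; 41; 53; 61];
 [:: 17; 29; 37; 41; 61];
 [:: 5; 13; 29; 37; 41; 61];
 [:: 53; 61; 73];
 [:: 17; 37; 61; 73];
 [:: 5; 29; 41; 53; 61];
 [:: 13; 17; 29; 37; 41; 53];
 [:: 41; 61; 89];
 [:: 37; 41; 53; 61];
 [:: 13; 29; 37; 53; 61];
 [:: 5; 13; 17; 29; 41; 89];
 [:: 5; 13; 17; 29; 37; 41; 53];
 [:: 29; 41; 53; 73];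
 [:: 17; 29; 37; 53; 61];
 [:: 13; 17; 29; 37; 41; 61];
 [:: 37; 73; 89];
 [:: 29; 37; 61; 73];
 [:: 17; 29; 41; 53; 61];
 [:: 5; 17; 29; 37; 53; 61];
 [:: 5; 13; 17; 29; 37; 41; 61];
 [:: 37; 41; 53; 73];
 [:: 13; 37; 41; 53; 61];
 [:: 5; 17; 29; 41; 53; 61];
 [:: 37; 73; 97];
 [:: 29; 37; 53; 89];
 [:: 17; 37; 41; 53; 61];
 [:: 13; 17; 29; 37; 53; 61];
 [:: 53; 61; 97];
 [:: 37; 41; 61; 73];
 [:: 17; 29; 41; 53; 73];
 [:: 13; 17; 29; 41; 53; 61];
 [:: 5; 13; 17; 29; 37; 53; 61];
 [:: 29; 53; 61; 73];
 [:: 13; 37; 41; 53; 73];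
 [:: 5; 17; 29; 41; 53; 73];
 [:: 5; 13; 17; 29; 41; 53; 61];
 [:: 37; 41; 53; 89];
 [:: 29; 37; 41; 53; 61];
 [:: 13; 17; 37; 41; 53; 61];
 [:: 61; 73; 89];
 [:: 37; 53; 61; 73];
 [:: 13; 37; 41; 61; 73];
 [:: 5; 29; 37; 41; 53; 61];
 [:: 5; 13; 17; 37; 41; 53; 61];
 [:: 41; 53; 61; 73];
 [:: 17; 37; 41; 61; 73];
 [:: 13; 17; 29; 37; 61; 73];
 [:: 5; 13; 17; 29; 41; 53; 73];
 [:: 29; 53; 61; 89];
 [:: 29; 37; 41; 53; 73];
 [:: 13; 29; 37; 41; 53; 61]].
Definition tbl3 : seq (seq nat) := [:: [:: 3; 7; 11; 23; 31; 47];
 [:: 7; 19; 23; 31; 43];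
 [:: 11; 23; 43; 47];
 [:: 23; 43; 59];
 [:: 3; 7; 19; 23; 31; 43];
 [:: 11; 19; 23; 31; 43];
 [:: 7; 31; 43; 47];
 [:: 23; 47; 59];
 [:: 3; 11; 19; 23; 31; 43];
 [:: 11; 19; 23; 31; 47];
 [:: 19; 23; 43; 47];
 [:: 31; 43; 59];
 [:: 7; 11; 19; 23; 31; 43];
 [:: 3; 19; 23; 43; 47];
 [:: 11; 23; 43; 59];
 [:: 3; 7; 11; 19; 23; 31; 43];
 [:: 7; 11; 19; 23; 31; 47];
 [:: 7; 19; 23; 43; 47];
 [:: 19; 31; 43; 47];
 [:: 3; 7; 11; 19; 23; 31; 47];
 [:: 3; 7; 19; 23; 43; 47];
 [:: 11; 19; 23; 43; 47];
 [:: 23; 31; 43; 47];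
 [:: 31; 47; 67];
 [:: 3; 11; 19; 23; 43; 47];
 [:: 7; 19; 31; 43; 47];
 [:: 19; 23; 47; 59];
 [:: 43; 47; 59];
 [:: 7; 11; 19; 23; 43; 47];
 [:: 11; 19; 31; 43; 47];
 [:: 19; 31; 43; 59];
 [:: 3; 7; 11; 19; 23; 43; 47];
 [:: 3; 11; 19; 31; 43; 47];
 [:: 11; 23; 31; 43; 47];
 [:: 23; 31; 43; 59];
 [:: 43; 47; 67];
 [:: 7; 11; 19; 31; 43; 47];
 [:: 7; 19; 31; 43; 59];
 [:: 23; 31; 47; 59];
 [:: 3; 7; 11; 19; 31; 43; 47];
 [:: 7; 11; 23; 31; 43; 47];
 [:: 19; 23; 31; 43; 47];
 [:: 23; 31; 43; 67];
 [:: 3; 7; 11; 23; 31; 43; 47];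
 [:: 3; 19; 23; 31; 43; 47];
 [:: 11; 23; 31; 43; 59];
 [:: 19; 43; 47; 59];
 [:: 3; 7; 11; 19; 23; 47; 59];
 [:: 7; 19; 23; 31; 43; 47];
 [:: 11; 23; 31; 47; 59];
 [:: 23; 43; 47; 59];
 [:: 3; 7; 19; 23; 31; 43; 47];
 [:: 11; 19; 23; 31; 43; 47];
 [:: 19; 23; 31; 43; 59];
 [:: 19; 43; 47; 67];
 [:: 3; 11; 19; 23; 31; 43; 47];
 [:: 3; 19; 23; 31; 43; 59];
 [:: 19; 23; 31; 47; 59];
 [:: 31; 43; 47; 59];
 [:: 7; 11; 19; 23; 31; 43; 47];
 [:: 7; 19; 23; 31; 43; 59];
 [:: 11; 23; 43; 47; 59];
 [:: 3; 7; 11; 19; 23; 31; 43; 47];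
 [:: 3; 7; 19; 23; 31; 43; 59];
 [:: 11; 19; 23; 31; 43; 59];
 [:: 7; 31; 43; 47; 59];
 [:: 31; 43; 47; 67];
 [:: 3; 11; 19; 23; 31; 43; 59];
 [:: 11; 19; 23; 31; 47; 59];
 [:: 19; 23; 43; 47; 59];
 [:: 23; 43; 59; 67]].
Definition chain1 := [:: 113; 197; 421; 829; 1669; 3329; 6661; 11981; 12037; 12041; 12049; 12073; 12097; 12101; 12109; 12113; 12149; 12157; 12161; 12197; 12241; 12253; 12269; 12277; 12281; 12289; 12301; 12329].
Definition chain3 := [:: 71; 139; 271; 547; 1091; 2179; 4363; 8731; 11987; 12007; 12011; 12043; 12071; 12107; 12119; 12143; 12163; 12203; 12211; 12227; 12239; 12251; 12263; 12323; 12343; 12347; 12379; 12391; 12451].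

Lemma conc1 : exists H, good 1 16384 122 H /\ 16 * 16384 + 1 + 122 <= H.+1.
Proof.
have b : base_ok 1 109 tbl1 by vm_compute.
have c : chain_ok 1 109 (121 + size tbl1) chain1 by vm_compute.
have g := chain_good (base_good b) c.
exists (121 + size tbl1 + sumn chain1); split; last by vm_compute.
by apply: good_mono g; vm_compute.
Qed.

Lemma conc3 : exists H, good 3 16384 122 H /\ 16 * 16384 + 1 + 122 <= H.+1.
Proof.
have b : base_ok 3 67 tbl3 by vm_compute.
have c : chain_ok 3 67 (121 + size tbl3) chain3 by vm_compute.
have g := chain_good (base_good b) c.
exists (121 + size tbl3 + sumn chain3); split; last by vm_compute.
by apply: good_mono g; vm_compute.
Qed.




Lemma reach a : (a = 1 \/ a = 3) -> forall n, exists X H,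
  [/\ good a X 122 H, 16384 <= X, 16 * X + 1 + 122 <= H.+1 & n <= H].
Proof.
move=> Ha; elim=> [|n [X [H [g X0 XH nH]]]].
  have [H [g h]] : exists H, good a 16384 122 H /\ 16 * 16384 + 1 + 122 <= H.+1.
    by case: Ha => ->; [exact: conc1 | exact: conc3].
  by exists 16384, H.
have k := @key a X Ha X0.
set S := \sum_(_ <= _ < _ | _) _ in k.
have g' : good a (16 * X + 1) 122 (H + S).
  rewrite addn1; apply: (good_range g XH); lia.
exists (16 * X + 1), (H + S); split => //; lia.
Qed.

Unset Implicit Arguments.

Theorem corollary2p6 (m : nat) : 122 <= m ->
  exists (ps qs : seq nat),
    [/\ uniq ps, all (fun p => prime p && (p %% 4 == 1)) ps & sumn ps = m] /\
    [/\ uniq qs, all (fun q => prime q && (q %% 4 == 3)) qs & sumn qs = m].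
Proof.
move=> hm.
have [X1 [H1 [g1 _ _ h1]]] := @reach 1 (or_introl erefl) m.
have [X3 [H3 [g3 _ _ h3]]] := @reach 3 (or_intror erefl) m.
have [ps [u1 c1 _ s1]] := g1 m (introT andP (conj hm h1)).
have [qs [u3 c3 _ s3]] := g3 m (introT andP (conj hm h3)).
by exists ps, qs.
Qed.
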